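(* Let $G$ be an abelian group, $n$ an integer, and $X$ a metric compactum. Every carrier of a nonzero element of $\check{H}^n(X;G)$ is a strong $V^n_G$-continuum.
   Context: $\check{H}^k(\,\cdot\,;G)$ is reduced Čech cohomology. A closed nonempty set $A\subset X$ is a (cohomological) carrier of a nonzero $\alpha\in\check{H}^n(X;G)$ if $i_A^*(\alpha)\neq0$ and $i_B^*(\alpha)=0$ for every proper closed $B\subsetneq A$, where $i_A, i_B$ are inclusions into $X$. For an open cover $\omega$, a map $g$ of a compactum $P$ onto $Y$ is an $\omega$-map if some open cover $\tau$ of $Y$ has $\{g^{-1}(V):V\in\tau\}$ refining $\omega$. For disjoint open $U_1,U_2\subset K$, a partition in $K$ between $U_1$ and $U_2$ is a closed $P\subset K$ with $K=F_1\cup F_2$, $F_1,F_2$ closed, $F_1\cap F_2=P$, $F_1\cap U_1=F_2\cap U_2=\emptyset$. A compactum $K$ is a strong $V^n_G$-continuum if for every two disjoint open $U_1,U_2\subset K$ there exist an open cover $\omega$ of $K_0=K\setminus(U_1\cup U_2)$ and $e\in\check{H}^{n-1}(K_0;G)$ such that for every partition $P$ in $K$ between $U_1$ and $U_2$ and every $\omega$-map $g$ of $P$ onto a space $Y$ we have $0\neq i_P^*(e)\in g^*(\check{H}^{n-1}(Y;G))$, where $i_P:P\hookrightarrow K_0$. *)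

(* Defs.v *)
From HB Require Import structures.
From mathcomp Require Import all_boot all_order all_algebra.
From mathcomp Require Import all_classical all_reals topology.
Set Implicit Arguments. Unset Strict Implicit. Unset Printing Implicit Defensive.
Import Order.TTheory GRing.Theory Num.Theory.
Local Open Scope classical_set_scope.
Local Open Scope ring_scope.

(* Reduced Cech cohomology of a subset A of a topological space T, with     *)
(* coefficients in an abelian group G, in degree n : int.                  *)
(* It is the direct limit, over open covers of A (indexed families of sets *)
(* relatively open in A), of the cohomology of the AUGMENTED ordered        *)
(* cochain complex of the nerve (the empty simplex is always present, which *)
(* gives reduced cohomology, incl. H~^{-1}(empty) = G).  A class is given by *)
(* a representative (cover, cocycle); a class is zero iff its pullback to   *)
(* some refinement is a coboundary.  Degree n uses simplices with           *)
(* sz n = n + 1 vertices.  For n < -1 the group is trivial.                  *)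

Definition sz (n : int) : nat := absz (n + 1)%R.

Definition rel_open {T : topologicalType} (A U : set T) : Prop :=
  exists O : set T, open O /\ U `&` A = O `&` A.

Definition is_cover {T : topologicalType} (A : set T) {I : Type}
  (U : I -> set T) : Prop :=
  (forall i, rel_open A (U i)) /\ A `<=` \bigcup_i U i.

Definition simplex {T I : Type} (A : set T) (U : I -> set T) (m : nat)
  (s : 'I_m -> I) : Prop :=
  m = 0%N \/ exists x, A x /\ forall k, U (s k) x.

Definition cobound {I : Type} {G : zmodType} (m : nat)
  (b : ('I_m -> I) -> G) : ('I_m.+1 -> I) -> G :=
  fun s => \sum_(i < m.+1)
     (if odd i then - b (fun k => s (lift i k)) else b (fun k => s (lift i k))).

Definition is_cocycle {T I : Type} {G : zmodType} (A : set T)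
  (U : I -> set T) (m : nat) (c : ('I_m -> I) -> G) : Prop :=
  forall s : 'I_m.+1 -> I, @simplex _ _ A U m.+1 s -> cobound c s = 0.

Definition is_coboundary {T I : Type} {G : zmodType} (A : set T)
  (U : I -> set T) (m : nat) : (('I_m -> I) -> G) -> Prop :=
  match m return (('I_m -> I) -> G) -> Prop with
  | 0%N => fun c => forall s, @simplex _ _ A U 0 s -> c s = 0
  | m'.+1 => fun c => exists b : ('I_m' -> I) -> G,
               forall s, @simplex _ _ A U m'.+1 s -> c s = cobound b s
  end.

Definition refinement {T I J : Type} (A : set T) (U : I -> set T)
  (W : J -> set T) (p : J -> I) : Prop :=
  forall j, W j `&` A `<=` U (p j).

Record cech_rep (T : Type) (G : zmodType) (n : int) := CechRep {
  cr_ind : Type;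
  cr_cov : cr_ind -> set T;
  cr_coch : ('I_(sz n) -> cr_ind) -> G }.
Arguments CechRep {T G n cr_ind}.
Arguments cr_ind {T G n}.
Arguments cr_cov {T G n}.
Arguments cr_coch {T G n}.

Definition cech_valid {T : topologicalType} {G : zmodType} {n : int}
  (A : set T) (r : cech_rep T G n) : Prop :=
  (-1 <= n)%R -> is_cover A (cr_cov r) /\ is_cocycle A (cr_cov r) (cr_coch r).

(* the class represented by r in H~^n(A;G) is zero (for B a subset of the
   original domain, cech_zero B r expresses i_B^*[r] = 0) *)
Definition cech_zero {T : topologicalType} {G : zmodType} {n : int}
  (A : set T) (r : cech_rep T G n) : Prop :=
  (n < -1)%R \/
  exists (J : Type) (W : J -> set T) (p : J -> cr_ind r),
    is_cover A W /\ refinement A (cr_cov r) W p /\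
    is_coboundary A W (fun s => cr_coch r (p \o s)).

Definition cech_pull {T Y : Type} {G : zmodType} {n : int} (g : T -> Y)
  (d : cech_rep Y G n) : cech_rep T G n :=
  @CechRep T G n (cr_ind d) (fun j => g @^-1` cr_cov d j) (cr_coch d).

Definition cech_sub {T : Type} {G : zmodType} {n : int}
  (r1 r2 : cech_rep T G n) : cech_rep T G n :=
  @CechRep T G n (cr_ind r1 * cr_ind r2)%type
    (fun ij => cr_cov r1 ij.1 `&` cr_cov r2 ij.2)
    (fun s => cr_coch r1 (fun k => (s k).1) - cr_coch r2 (fun k => (s k).2)).

Definition carrier {T : topologicalType} {G : zmodType} {n : int}
  (alpha : cech_rep T G n) (A : set T) : Prop :=
  closed A /\ A !=set0 /\ ~ cech_zero A alpha /\
  forall B : set T, closed B -> B `<=` A -> B <> A -> cech_zero B alpha.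

Definition open_in {T : topologicalType} (K U : set T) : Prop :=
  U `<=` K /\ exists O : set T, open O /\ U = O `&` K.

Definition closed_in {T : topologicalType} (K F : set T) : Prop :=
  F `<=` K /\ exists C : set T, closed C /\ F = C `&` K.

Definition is_partition {T : topologicalType} (K U1 U2 P : set T) : Prop :=
  exists F1 F2 : set T, closed_in K F1 /\ closed_in K F2 /\
    K = F1 `|` F2 /\ F1 `&` F2 = P /\ F1 `&` U1 = set0 /\ F2 `&` U2 = set0.

Definition omega_map {T Y : topologicalType} {Iw : Type} (W : Iw -> set T)
  (P : set T) (g : T -> Y) : Prop :=
  {within P, continuous g} /\ g @` P = [set: Y] /\
  exists (J : Type) (V : J -> set Y),
    (forall j, open (V j)) /\ [set: Y] `<=` \bigcup_j V j /\
    forall j, exists i, g @^-1` V j `&` P `<=` W i.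

Definition strong_V {T : topologicalType} (G : zmodType) (n : int)
  (K : set T) : Prop :=
  forall U1 U2 : set T, open_in K U1 -> open_in K U2 ->
    U1 !=set0 -> U2 !=set0 -> U1 `&` U2 = set0 ->
    exists (Iw : Type) (W : Iw -> set T) (e : cech_rep T G (n - 1)),
      is_cover (K `\` (U1 `|` U2)) W /\
      cech_valid (K `\` (U1 `|` U2)) e /\
      forall P : set T, is_partition K U1 U2 P ->
      forall (Y : topologicalType) (g : T -> Y), omega_map W P g ->
        ~ cech_zero P e /\
        exists d : cech_rep Y G (n - 1),
          cech_valid [set: Y] d /\ cech_zero P (cech_sub e (cech_pull g d)).

(* Main.v *)
Require Import Defs.
From HB Require Import structures.
From mathcomp Require Import all_boot all_order all_algebra.
From mathcomp Require Import all_classical all_reals topology.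
From mathcomp Require Import zify lra.
Set Implicit Arguments. Unset Strict Implicit. Unset Printing Implicit Defensive.
Import Order.TTheory GRing.Theory Num.Theory.
Local Open Scope classical_set_scope.
Local Open Scope ring_scope.


Section Alt.
Variable G : zmodType.
Definition alt (i : nat) (x : G) := if odd i then - x else x.
Lemma altD i x y : alt i (x + y) = alt i x + alt i y.
Proof. by rewrite /alt; case: ifP => // _; rewrite opprD. Qed.
Lemma altN i x : alt i (- x) = - alt i x.
Proof. by rewrite /alt; case: ifP. Qed.
Lemma altB i x y : alt i (x - y) = alt i x - alt i y.
Proof. by rewrite altD altN. Qed.
Lemma alt0 i : alt i 0 = 0.
Proof. by rewrite /alt; case: ifP => //; rewrite oppr0. Qed.
Lemma altS i x : alt i.+1 x = - alt i x.
Proof. by rewrite /alt /=; case: (odd i) => //=; rewrite opprK. Qed.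
Lemma alt_alt i j x : alt i (alt j x) = alt (i + j) x.
Proof. by rewrite /alt oddD; case: (odd i); case: (odd j) => //=; rewrite opprK. Qed.
Lemma alt_sum I r (P : pred I) (F : I -> G) i :
  alt i (\sum_(k <- r | P k) F k) = \sum_(k <- r | P k) alt i (F k).
Proof.
elim/big_rec2: _; first by rewrite alt0.
by move=> k y1 y2 _ <-; rewrite altD.
Qed.
End Alt.

Lemma cobound_lin (I : Type) (G : zmodType) m (f g h : ('I_m -> I) -> G) s :
  cobound (fun t => f t - g t + h t) s = cobound f s - cobound g s + cobound h s.
Proof.
transitivity (\sum_(i < m.+1) ((alt i (f (fun k => s (lift i k))) - alt i (g (fun k => s (lift i k))))
   + alt i (h (fun k => s (lift i k))))).
  by apply: eq_bigr => i _; rewrite -altB -altD.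
by rewrite big_split /= -sumrB.
Qed.

Lemma cobound_alt (I : Type) (G : zmodType) m (b : ('I_m -> I) -> G) s :
  cobound b s = \sum_(i < m.+1) alt i (b (fun k => s (lift i k))).
Proof. by []. Qed.

Lemma cobound0 (I : Type) (G : zmodType) m (s : 'I_m.+1 -> I) :
  cobound (fun _ : 'I_m -> I => (0 : G)) s = 0.
Proof. by rewrite /cobound big1 // => i _; case: ifP; rewrite ?oppr0. Qed.

Section NatWorld.
Variables (I : Type) (G : zmodType).
Definition cN (m : nat) (c : ('I_m -> I) -> G) (u : nat -> I) : G := c (fun k => u k).
Definition cobN (m : nat) (phi : (nat -> I) -> G) (u : nat -> I) : G :=
  \sum_(i < m.+1) alt i (phi (fun p => u (bump i p))).
Lemma cN_cobound m c u : cN (@cobound I G m c) u = cobN m (cN c) u.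
Proof. by []. Qed.

Lemma dd_gen (a : nat -> nat -> G) N :
  (forall i j, (i <= j)%N -> a i j = - a j.+1 i) ->
  \sum_(i < N.+1) \sum_(j < N) a i j = 0.
Proof.
move=> H; elim: N => [|N IH]; first by rewrite big1 // => i _; rewrite big_ord0.
rewrite big_ord_recr /=.
have -> : \sum_(i < N.+1) \sum_(j < N.+1) a i j =
          \sum_(i < N.+1) \sum_(j < N) a i j + \sum_(i < N.+1) a i N.
  by rewrite -big_split /=; apply: eq_bigr => i _; rewrite big_ord_recr.
rewrite IH add0r -big_split big1 // => i _ /=.
by rewrite H ?addNr // -ltnS ltn_ord.
Qed.

Lemma bump_bump i j p : (i <= j)%N -> bump i (bump j p) = bump j.+1 (bump i p).
Proof. by rewrite /bump => ij; case: (leqP j p); case: (leqP i p); lia. Qed.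

Lemma ddN m (phi : (nat -> I) -> G) u : cobN m.+1 (cobN m phi) u = 0.
Proof.
rewrite /cobN.
have -> : \sum_(i < m.+2) alt i (\sum_(i0 < m.+1) alt i0 (phi (fun p => u (bump i (bump i0 p))))) =
   \sum_(i < m.+2) \sum_(j < m.+1) (fun i j => alt (i + j) (phi (fun p => u (bump i (bump j p))))) i j.
  by apply: eq_bigr => i _; rewrite alt_sum; apply: eq_bigr => j _; rewrite alt_alt.
apply: (@dd_gen (fun i j => alt (i + j) (phi (fun p => u (bump i (bump j p)))))) => i j ij /=.
have -> : (fun p => u (bump i (bump j p))) = (fun p => u (bump j.+1 (bump i p))).
  by apply: funext => p; rewrite bump_bump.
by rewrite addSn altS opprK addnC.
Qed.
End NatWorld.

Lemma dd (I : Type) (G : zmodType) m (b : ('I_m -> I) -> G) (s : 'I_m.+2 -> I) :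
  cobound (cobound b) s = 0.
Proof.
have := ddN m (cN b) (fun p => if insub p is Some o then s o else s ord0).
rewrite /cobN /cN; move=> <-; rewrite cobound_alt; apply: eq_bigr => i _.
rewrite cobound_alt.
congr alt; apply: eq_bigr => j _; congr alt; congr b; apply: funext => k.
have h : (bump i (bump j k) < m.+2)%N := ltn_ord (lift i (lift j k)).
case: insubP => [o _ ho|]; last by rewrite h.
by congr s; apply: val_inj; rewrite ho.
Qed.


Section Prism.
Variables (I : Type) (G : zmodType).
Implicit Types (uf ug : nat -> I) (phi : (nat -> I) -> G).
Definition fb (k : nat) (u : nat -> I) : nat -> I := fun p => u (bump k p).
Definition Rs (i : nat) uf ug : nat -> I := fun p => if (p <= i)%N then uf p else ug p.-1.
Definition Qs (i : nat) uf ug : nat -> I := fun p => if (p < i)%N then uf p else ug p.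
Definition hN (m : nat) phi uf ug : G := \sum_(i < m) alt i (phi (Rs i uf ug)).
Definition Hk phi uf ug (i k : nat) : G := alt (i + k) (phi (Rs i (fb k uf) (fb k ug))).

Ltac bcase :=
  rewrite /fb /Rs /Qs /bump;
  repeat match goal with |- context[(?a <= ?b)%N] => let E := fresh "E" in case E : (a <= b)%N end;
  rewrite ?add1n ?add0n /=;
  first [ by [] | lia | (congr (_ _); lia) ].

Lemma faceA i k uf ug : (k < i)%N -> fb k (Rs i uf ug) = Rs i.-1 (fb k uf) (fb k ug).
Proof. by move=> ki; apply: funext => p; bcase. Qed.

Lemma faceB i uf ug : fb i (Rs i uf ug) = Qs i uf ug.
Proof. by apply: funext => p; bcase. Qed.

Lemma faceC i uf ug : fb i.+1 (Rs i uf ug) = Qs i.+1 uf ug.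
Proof. by apply: funext => p; bcase. Qed.

Lemma faceD i k uf ug : (i.+1 < k)%N -> fb k (Rs i uf ug) = Rs i (fb k.-1 uf) (fb k.-1 ug).
Proof. by move=> ik; apply: funext => p; bcase. Qed.

Lemma cobN_fb m phi u : cobN m phi u = \sum_(0 <= k < m.+1) alt k (phi (fb k u)).
Proof. by rewrite big_mkord. Qed.

Lemma rowN m phi uf ug i : (i < m.+1)%N ->
  alt i (cobN m.+1 phi (Rs i uf ug)) =
  (phi (Qs i uf ug) - phi (Qs i.+1 uf ug)) -
  (\sum_(0 <= k < i) Hk phi uf ug i.-1 k + \sum_(i.+1 <= k < m.+1) Hk phi uf ug i k).
Proof.
move=> im; rewrite cobN_fb (big_cat_nat _ (n:=i)); [|by []|by lia].
rewrite (@big_ltn _ _ _ i); last by lia.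
rewrite (@big_ltn _ _ _ i.+1); last by lia.
rewrite big_add1 /= faceB faceC !altD !alt_alt.
have -> : alt (i + i) (phi (Qs i uf ug)) = phi (Qs i uf ug).
  by rewrite /alt oddD addbb.
have -> : alt (i + i.+1) (phi (Qs i.+1 uf ug)) = - phi (Qs i.+1 uf ug).
  by rewrite addnS altS /alt oddD addbb.
have -> : alt i (\sum_(0 <= k < i) alt k (phi (fb k (Rs i uf ug)))) =
          - \sum_(0 <= k < i) Hk phi uf ug i.-1 k.
  rewrite alt_sum -sumrN; apply: eq_big_nat => k /andP[_ ki].
  rewrite faceA // alt_alt /Hk; have -> : (i + k = (i.-1 + k).+1)%N by lia.
  by rewrite altS.
have -> : alt i (\sum_(i.+1 <= k < m.+1) alt k.+1 (phi (fb k.+1 (Rs i uf ug)))) =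
          - \sum_(i.+1 <= k < m.+1) Hk phi uf ug i k.
  rewrite alt_sum -sumrN; apply: eq_big_nat => k /andP[ik _].
  rewrite faceD // alt_alt /Hk addnS altS //.
move: (phi (Qs i uf ug)) (phi (Qs i.+1 uf ug)) (\sum_(0 <= k < i) Hk phi uf ug i.-1 k)
  (\sum_(i.+1 <= k < m.+1) Hk phi uf ug i k) => a b x y.
by rewrite opprD addrCA -!addrA; congr (_ + _); rewrite addrCA.
Qed.

Lemma prismN m phi uf ug :
  (forall i, (i < m.+1)%N -> cobN m.+1 phi (Rs i uf ug) = 0) ->
  \sum_(k < m.+1) alt k (hN m phi (fb k uf) (fb k ug)) =
  phi (Qs 0 uf ug) - phi (Qs m.+1 uf ug).
Proof.
move=> H.
have E0 : \sum_(0 <= i < m.+1) alt i (cobN m.+1 phi (Rs i uf ug)) = 0.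
  by rewrite big1_seq // => i; rewrite mem_iota => /andP[_ h]; rewrite H ?alt0.
rewrite (eq_big_nat _ _ (fun i h => rowN phi uf ug (proj2 (andP h)))) in E0.
rewrite sumrB in E0.
have Tel : \sum_(0 <= i < m.+1) (phi (Qs i uf ug) - phi (Qs i.+1 uf ug)) =
           phi (Qs 0 uf ug) - phi (Qs m.+1 uf ug).
  have := telescope_sumr (fun i => phi (Qs i uf ug)) (leq0n m.+1).
  move=> /(congr1 (fun x => - x)); rewrite opprB => <-; rewrite -sumrN.
  by apply: eq_bigr => i _; rewrite opprB.
rewrite Tel in E0.
have LHS : \sum_(k < m.+1) alt k (hN m phi (fb k uf) (fb k ug)) =
  \sum_(0 <= i < m.+1) (\sum_(0 <= k < i) Hk phi uf ug i.-1 k +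
                        \sum_(i.+1 <= k < m.+1) Hk phi uf ug i k).
  rewrite big_split /= big_nat_recl // big_geq // add0r.
  rewrite big_nat_recr //= [X in _ + (_ + X)]big_geq // addr0 -big_split /=.
  rewrite (eq_big_nat _ _ (F2 := fun i => \sum_(0 <= k < m.+1) Hk phi uf ug i k)); last first.
    by move=> i /andP[_ im]; rewrite -big_cat_nat //; lia.
  rewrite exchange_big /= big_mkord; apply: eq_bigr => k _.
  rewrite /hN alt_sum big_mkord; apply: eq_bigr => i _.
  by rewrite alt_alt /Hk addnC.
rewrite LHS; apply/eqP; rewrite -subr_eq0; apply/eqP.
by move/eqP: E0; rewrite subr_eq0 => /eqP ->; rewrite subrr.
Qed.
End Prism.


Section PrismOrd.
Variables (I K : Type) (G : zmodType) (i0 : I).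
Definition tN (m : nat) (t : 'I_m -> K) (F : K -> I) : nat -> I :=
  fun p => if insub p is Some o then F (t o) else i0.

Lemma tN_ord m (t : 'I_m -> K) F (j : 'I_m) : tN t F j = F (t j).
Proof.
rewrite /tN; case: insubP => [o _ ho|]; last by rewrite ltn_ord.
by congr (F (t _)); apply: val_inj.
Qed.

Lemma tN_face m (S : 'I_m.+1 -> K) F (k : 'I_m.+1) :
  tN (fun j => S (lift k j)) F = fb k (tN S F).
Proof.
apply: funext => p; rewrite /tN /fb.
case: insubP => [o _ ho|hp].
  case: insubP => [o' _ ho'|]; last by rewrite -ho -[bump k o]/(val (lift k o)) ltn_ord.
  by congr (F (S _)); apply: val_inj; rewrite /= ho' ho.
case: insubP => [o' _ ho'|//].
have := ltn_ord o'; rewrite ho' /bump; move: hp (ltn_ord k); rewrite -ltnNge; lia.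
Qed.

Definition prism (m : nat) (f g : K -> I) (c : ('I_m.+1 -> I) -> G) (t : 'I_m -> K) : G :=
  hN m (cN c) (tN t f) (tN t g).

Lemma prism_congr m (f g f' g' : K -> I) c (t t' : 'I_m -> K) :
  (forall k, f (t k) = f' (t' k)) -> (forall k, g (t k) = g' (t' k)) ->
  prism f g c t = prism f' g' c t'.
Proof.
move=> Hf Hg; rewrite /prism; congr hN; apply: funext => p; rewrite /tN;
  by case: insub => [o|].
Qed.

Definition Rsimp (m : nat) (f g : K -> I) (S : 'I_m.+1 -> K) (i : nat) : 'I_m.+2 -> I :=
  fun k => Rs i (tN S f) (tN S g) k.

Lemma Rsimp_val m f g (S : 'I_m.+1 -> K) i (k : 'I_m.+2) : (i < m.+1)%N ->
  exists j : 'I_m.+1, Rsimp f g S i k = f (S j) \/ Rsimp f g S i k = g (S j).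
Proof.
move=> im; rewrite /Rsimp /Rs; case: ifP => ki.
  have kl : (k < m.+1)%N by lia.
  by exists (Ordinal kl); left; rewrite -tN_ord.
have kl : (k.-1 < m.+1)%N by have := ltn_ord k; lia.
by exists (Ordinal kl); right; rewrite -tN_ord.
Qed.

Lemma prism_cob m (f g : K -> I) c (S : 'I_m.+1 -> K) :
  (forall i, (i < m.+1)%N -> cobound c (Rsimp f g S i) = 0) ->
  cobound (prism f g c) S = c (fun k => g (S k)) - c (fun k => f (S k)).
Proof.
move=> H; rewrite cobound_alt.
have -> : \sum_(i < m.+1) alt i (prism f g c (fun k => S (lift i k))) =
  \sum_(i < m.+1) alt i (hN m (cN c) (fb i (tN S f)) (fb i (tN S g))).
  by apply: eq_bigr => i _; rewrite /prism !tN_face.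
rewrite prismN; last by move=> i hi; rewrite -cN_cobound; exact: H.
rewrite /cN /Qs; congr (c _ - c _); apply: funext => k /=.
  by rewrite tN_ord.
by rewrite ltn_ord tN_ord.
Qed.
End PrismOrd.

Lemma prism_congr2 (I K K' : Type) (G : zmodType) (i0 : I) m (f g : K -> I) (f' g' : K' -> I)
  (c : ('I_m.+1 -> I) -> G) (t : 'I_m -> K) (t' : 'I_m -> K') :
  (forall k, f (t k) = f' (t' k)) -> (forall k, g (t k) = g' (t' k)) ->
  prism i0 f g c t = prism i0 f' g' c t'.
Proof.
move=> Hf Hg; rewrite /prism; congr hN; apply: funext => p; rewrite /tN;
  by case: insub => [o|].
Qed.


Lemma grp1 (V : zmodType) (x y z : V) : x = y - z + (x - y + z).
Proof. by rewrite (addrC (x - y)) addrA subrK addrC subrK. Qed.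

Section Glue.
Variables (X : topologicalType) (G : zmodType) (I : Type) (U : I -> set X).
Hypothesis Uo : forall i, open (U i).
Variables (M : nat) (a : ('I_M.+1 -> I) -> G) (i0 : I).
Hypothesis acoc : forall s : 'I_M.+2 -> I, (exists x, forall k, U (s k) x) -> cobound a s = 0.
Variables (A F1 F2 : set X).
Hypothesis AF : A = F1 `|` F2.
Variables (J1 J2 : Type) (O1 : J1 -> set X) (O2 : J2 -> set X) (p1 : J1 -> I) (p2 : J2 -> I).
Hypotheses (O1o : forall j, open (O1 j)) (O2o : forall j, open (O2 j)).
Hypotheses (F1c : closed F1) (F2c : closed F2).
Hypotheses (F1cov : F1 `<=` \bigcup_j O1 j) (F2cov : F2 `<=` \bigcup_j O2 j).
Hypotheses (O1ref : forall j, O1 j `&` F1 `<=` U (p1 j)) (O2ref : forall j, O2 j `&` F2 `<=` U (p2 j)).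
Variables (b1 : ('I_M -> J1) -> G) (b2 : ('I_M -> J2) -> G).
Hypothesis b1P : forall s : 'I_M.+1 -> J1, (exists x, F1 x /\ forall k, O1 (s k) x) ->
  a (p1 \o s) = cobound b1 s.
Hypothesis b2P : forall s : 'I_M.+1 -> J2, (exists x, F2 x /\ forall k, O2 (s k) x) ->
  a (p2 \o s) = cobound b2 s.

Definition zeroC (B : set X) := exists (J : Type) (W : J -> set X) (p : J -> I),
  is_cover B W /\ refinement B U W p /\ @is_coboundary X J G B W M.+1 (fun s => a (p \o s)).

Lemma zero_side (J : Type) (O : J -> set X) (p : J -> I) (F : set X) (b : ('I_M -> J) -> G) :
  (forall j, open (O j)) -> F `<=` \bigcup_j O j -> (forall j, O j `&` F `<=` U (p j)) ->
  (forall s : 'I_M.+1 -> J, (exists x, F x /\ forall k, O (s k) x) -> a (p \o s) = cobound b s) ->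
  A `<=` F -> zeroC A.
Proof.
move=> Oo Fcov Oref bP AsF; exists J, O, p; split; [|split].
- split; last by move=> x /AsF /Fcov.
  by move=> j; exists (O j); split.
- by move=> j x [Ox Ax]; apply: Oref; split => //; exact: AsF.
- exists b => s [e|[x [Ax Hx]]] /=; first discriminate.
  apply: bP; exists x; split => //; exact: AsF.
Qed.

Variables (L : Type) (Z3 : L -> set X) (j1 : L -> J1) (j2 : L -> J2).
Hypothesis Z3o : forall l, open (Z3 l).
Hypothesis Z3a : forall l, Z3 l `<=` O1 (j1 l) `&` O2 (j2 l) `&` U (p1 (j1 l)) `&` U (p2 (j2 l)).
Hypothesis Z3cov : forall x, F1 x -> F2 x -> exists l, Z3 l x.
Hypothesis Ppt : forall tau : 'I_M.+1 -> L, (exists y, A y /\ forall i, Z3 (tau i) y) ->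
  exists z, F1 z /\ forall i, O1 (j1 (tau i)) z.

Inductive kz := K1 of J1 | K2 of J2 | K3 of L.
Variable C : ('I_M -> kz) -> G.
Hypothesis Ccoc : forall S : 'I_M.+1 -> kz, cobound C S = 0.
Hypothesis Cagree : forall tau : 'I_M -> L, (exists y, A y /\ forall i, Z3 (tau i) y) ->
  C (fun k => K3 (tau k)) = b1 (j1 \o tau) - b2 (j2 \o tau) + prism i0 (p1 \o j1) (p2 \o j2) a tau.

Definition Zs (k : kz) : set X := match k with
  | K1 j => O1 j `&` U (p1 j) `&` ~` F2
  | K2 j => O2 j `&` U (p2 j) `&` ~` F1
  | K3 l => Z3 l end.
Definition rho (k : kz) : I := match k with K1 j => p1 j | K2 j => p2 j | K3 l => p1 (j1 l) end.
Definition is1 (k : kz) := if k is K1 _ then true else false.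
Definition is2 (k : kz) := if k is K2 _ then true else false.

Lemma Zs_open k : open (Zs k).
Proof.
case: k => [j|j|l] /=; last exact: Z3o.
- by apply: openI; [apply: openI|exact: closed_openC].
- by apply: openI; [apply: openI|exact: closed_openC].
Qed.

Lemma Zs_ref k : Zs k `<=` U (rho k).
Proof. by case: k => [j|j|l] /= x; [case=> [[]]|case=> [[]]|move=> /Z3a [[[]]]]. Qed.

Lemma no12 (S : 'I_M.+1 -> kz) y : A y -> (forall k, Zs (S k) y) ->
  forall k1 k2, is1 (S k1) -> is2 (S k2) -> False.
Proof.
move=> Ay Hy k1 k2; move: (Hy k1) (Hy k2).
case: (S k1) => //= ?; case: (S k2) => //= ? [_ nF2] [_ nF1] _ _.
by move: Ay; rewrite AF => -[].
Qed.

Lemma Zs_cover : A `<=` \bigcup_k Zs k.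
Proof.
move=> y; rewrite AF => Ay.
have [F2y|nF2y] := pselect (F2 y); have [F1y|nF1y] := pselect (F1 y).
- by have [l Zl] := Z3cov F1y F2y; exists (K3 l).
- have [j _ Oj] := F2cov F2y; exists (K2 j) => //=; split => //; split => //.
  exact: O2ref.
- have [j _ Oj] := F1cov F1y; exists (K1 j) => //=; split => //; split => //.
  exact: O1ref.
- by case: Ay.
Qed.

Variables (d1 : J1) (d2 : J2).
Definition pi1 (k : kz) : J1 := match k with K1 j => j | K2 _ => d1 | K3 l => j1 l end.
Definition pi2 (k : kz) : J2 := match k with K1 _ => d2 | K2 j => j | K3 l => j2 l end.
Definition side1 (t : 'I_M -> kz) : bool := [forall k, ~~ is2 (t k)].
Definition Hz := prism i0 rho (fun k => p2 (pi2 k)) a.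
Definition bz (t : 'I_M -> kz) : G :=
  if side1 t then b1 (pi1 \o t) else b2 (pi2 \o t) - Hz t + C t.

Lemma all3 m (t : 'I_m -> kz) : (forall k, ~~ is1 (t k)) -> (forall k, ~~ is2 (t k)) ->
  exists tau : 'I_m -> L, t = (fun k => K3 (tau k)).
Proof.
move=> h1 h2.
have : forall k, exists l, t k = K3 l.
  by move=> k; move: (h1 k) (h2 k); case: (t k) => // l _ _; exists l.
move=> /choice [tau Htau]; exists tau; exact: funext.
Qed.

Lemma glue_main : zeroC A.
Proof.
exists kz, Zs, rho; split; [|split].
- split; last exact: Zs_cover.
  by move=> k; exists (Zs k); split => //; exact: Zs_open.
- by move=> k x [Zx _]; exact: Zs_ref.
exists bz => S [e|[y [Ay Hy]]] /=; first discriminate.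
have N12 := no12 Ay Hy.
have [s1|ns1] := boolP [forall k, ~~ is2 (S k)].
-
  have sf : forall k : 'I_M.+1, side1 (fun j => S (lift k j)).
    by move=> k; apply/forallP => j; exact: (forallP s1).
  rewrite cobound_alt.
  have -> : \sum_(i < M.+1) alt i (bz (fun k => S (lift i k))) =
            cobound b1 (pi1 \o S).
    by rewrite cobound_alt; apply: eq_bigr => i _; rewrite /bz sf.
  have -> : a (rho \o S) = a (p1 \o (pi1 \o S)).
    congr a; apply: funext => k /=; move: (forallP s1 k); by case: (S k).
  apply: b1P.
  have [[k1 i1]|n1] := pselect (exists k, is1 (S k)).
  + exists y; split.
      have F1y : (F1 `|` F2) y by rewrite -AF.
      case: F1y => // F2y; move: (Hy k1) i1; case: (S k1) => //= j [_ nF2] _.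
      by exfalso; exact: nF2.
    move=> k /=; move: (Hy k) (forallP s1 k); case: (S k) => //= [j [[]]//|l].
    by move=> /Z3a [[[]]].
  + have [tau Etau] : exists tau : 'I_M.+1 -> L, S = (fun k => K3 (tau k)).
      apply: all3; last exact/forallP.
      by move=> k; apply/negP => h; apply: n1; exists k.
    have [z [F1z Hz1]] : exists z, F1 z /\ forall i, O1 (j1 (tau i)) z.
      by apply: Ppt; exists y; split => // i; move: (Hy i); rewrite Etau.
    by exists z; split => // k; rewrite Etau /=; exact: Hz1.
-
  have [k2 i2] : exists k, is2 (S k).
    by move: ns1; rewrite negb_forall => /existsP [k]; rewrite negbK => h; exists k.
  have n1 : forall k, ~~ is1 (S k).
    by move=> k; apply/negP => h; exact: (N12 k k2).
  have F2y : F2 y.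
    have : (F1 `|` F2) y by rewrite -AF.
    by case => //; move: (Hy k2) i2; case: (S k2) => //= j [_ nF1] _ /nF1.
  have face : forall i : 'I_M.+1, bz (fun j => S (lift i j)) =
      b2 (pi2 \o (fun j => S (lift i j))) - Hz (fun j => S (lift i j)) + C (fun j => S (lift i j)).
    move=> i; rewrite /bz; case: ifP => // sf.
    have [tau Etau] := all3 (fun k => n1 (lift i k)) (forallP sf).
    rewrite Etau Cagree; last first.
      exists y; split => // k; move: (Hy (lift i k)).
      by have -> : S (lift i k) = K3 (tau k) by exact: (congr1 (fun f => f k) Etau).
    have -> : Hz (fun k => K3 (tau k)) = prism i0 (p1 \o j1) (p2 \o j2) a tau.
      by apply: prism_congr2.
    exact: grp1.
  rewrite cobound_alt.
  have -> : \sum_(i < M.+1) alt i (bz (fun k => S (lift i k))) =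
    cobound (fun t => b2 (pi2 \o t) - Hz t + C t) S.
    by rewrite cobound_alt; apply: eq_bigr => i _; rewrite face.
  rewrite cobound_lin Ccoc addr0.
  have -> : cobound (fun t => b2 (pi2 \o t)) S = cobound b2 (pi2 \o S) by [].
  rewrite -b2P; last first.
    exists y; split => // k /=; move: (Hy k) (n1 k); case: (S k) => //= [j [[]]//|l].
    by move=> /Z3a [[[]]].
  rewrite /Hz prism_cob.
    by rewrite opprB addrC subrK.
  move=> i hi; apply: acoc; exists y => k.
  have [j [->|->]] := Rsimp_val i0 rho (fun k => p2 (pi2 k)) S k hi.
    exact: Zs_ref.
  move: (Hy j) (n1 j); case: (S j) => //= [j' [[]]//|l].
  by move=> /Z3a [[]].
Qed.
End Glue.

From mathcomp Require Import finmap.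

Lemma cob_uniform (T J : Type) (G : zmodType) (B : set T) (W : J -> set T) m
  (c : ('I_m -> J) -> G) : @is_coboundary T J G B W m c ->
  exists Cv : ('I_m -> J) -> G, [/\ (forall s, simplex B W s -> c s = Cv s),
    (forall S : 'I_m.+1 -> J, cobound Cv S = 0) & (m = 0%N -> forall s, Cv s = 0)].
Proof.
case: m c => [|m] c /=.
  move=> H; exists (fun _ => 0); split=> [s hs|S|//]; first by rewrite H.
  by rewrite cobound0.
case=> b Hb; exists (cobound b); split=> [s hs|S|//]; first exact: Hb.
by rewrite dd.
Qed.

Lemma pos_min (R : realType) (T : eqType) (F : T -> R) (s : seq T) :
  (forall x, x \in s -> 0 < F x) -> exists2 d : R, 0 < d & forall x, x \in s -> d <= F x.
Proof.
elim: s => [|y s IH] H; first by exists 1.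
have [d d0 Hd] : exists2 d : R, 0 < d & forall x, x \in s -> d <= F x.
  by apply: IH => x xs; apply: H; rewrite inE xs orbT.
have Fy : 0 < F y by apply: H; rewrite inE eqxx.
exists (Num.min d (F y)); first by rewrite lt_min d0 Fy.
move=> x; rewrite inE => /orP [/eqP ->|xs]; rewrite ge_min ?lexx ?orbT //.
by rewrite Hd.
Qed.

Lemma taut (R : realType) (X : pseudoMetricType R) (P : set X) (Pc : compact P)
  (Jv : Type) (V : Jv -> set X) : is_cover P V -> P !=set0 ->
  exists (D : seq X) (eps : X -> R) (vmap : X -> Jv) (dl : R),
    0 < dl /\
    (forall x, x \in D -> [/\ P x, dl <= eps x / 2, 0 < eps x & ball x (eps x) `&` P `<=` V (vmap x)]) /\
    P `<=` \bigcup_(x in [set x | x \in D]) (ball x (eps x / 2))°.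
Proof.
move=> [Vro Vcov] [x0 Px0].
have [j0 _ _] := Vcov x0 Px0.
have : forall x, exists je : Jv * R, P x -> 0 < je.2 /\ ball x je.2 `&` P `<=` V je.1.
  move=> x; have [Px|nPx] := pselect (P x); last by exists (j0, 1).
  have [j _ Vj] := Vcov x Px.
  have [O [Oo EO]] := Vro j.
  have OxN : nbhs x O.
    apply: open_nbhs_nbhs; split => //.
    by have : (V j `&` P) x by []; rewrite EO => -[].
  have /nbhs_ballP [e e0 be] := OxN.
  exists (j, e) => _; split => // y [bxy Py] /=.
  have : (O `&` P) y by split => //; exact: be.
  by rewrite -EO => -[].
move=> /choice [je Hje].
pose eps x := (je x).2; pose vmap x := (je x).1.
have cP : cover_compact P.
  pose pX := HB.pack_for ptopologicalType X (isPointed.Build X x0).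
  have E := @compact_cover pX.
  by move: Pc; have -> : @compact X = @compact pX by []; rewrite E.
have fo : forall x, [set x | P x] x -> open ((ball x (eps x / 2))°) by move=> x _; exact: open_interior.
have Pcov : P `<=` cover [set x | P x] (fun x => (ball x (eps x / 2))°).
  move=> x Px; exists x => //; rewrite /interior /=.
  by apply: nbhsx_ballx; have [h _] := Hje x Px; apply: divr_gt0.
have [D DP PD] := cP X _ _ fo Pcov.
have DP' : forall x, x \in D -> P x by move=> x /DP; exact: set_mem.
have memD : forall x, (x \in (finmap.enum_fset D)) = (x \in D) by [].
have [dl dl0 Hdl] : exists2 d : R, 0 < d & forall x, x \in finmap.enum_fset D -> d <= eps x / 2.
  apply: pos_min => x; rewrite memD => xD; have [h _] := Hje x (DP' x xD); by apply: divr_gt0.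
exists ((finmap.enum_fset D)), eps, vmap, dl; split => //; split.
  move=> x; rewrite memD => xD; have Px := DP' x xD; have [h1 h2] := Hje x Px.
  by split => //; apply: Hdl; rewrite memD.
by move=> x /PD [y yD Hy]; exists y.
Qed.


Section GlueFull.
Variables (R : realType) (X : pseudoMetricType R) (G : zmodType) (I : Type) (U : I -> set X).
Hypothesis Uo : forall i, open (U i).
Variables (M : nat) (a : ('I_M.+1 -> I) -> G) (i0 : I).
Hypothesis acoc : forall s : 'I_M.+2 -> I, (exists x, forall k, U (s k) x) -> cobound a s = 0.
Variables (A F1 F2 : set X).
Hypothesis AF : A = F1 `|` F2.
Variables (J1 J2 : Type) (O1 : J1 -> set X) (O2 : J2 -> set X) (p1 : J1 -> I) (p2 : J2 -> I).
Hypotheses (O1o : forall j, open (O1 j)) (O2o : forall j, open (O2 j)).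
Hypotheses (F1c : closed F1) (F2c : closed F2) (cX : compact [set: X]).
Hypotheses (F1cov : F1 `<=` \bigcup_j O1 j) (F2cov : F2 `<=` \bigcup_j O2 j).
Hypotheses (O1ref : forall j, O1 j `&` F1 `<=` U (p1 j)) (O2ref : forall j, O2 j `&` F2 `<=` U (p2 j)).
Variables (b1 : ('I_M -> J1) -> G) (b2 : ('I_M -> J2) -> G).
Hypothesis b1P : forall s : 'I_M.+1 -> J1, (exists x, F1 x /\ forall k, O1 (s k) x) ->
  a (p1 \o s) = cobound b1 s.
Hypothesis b2P : forall s : 'I_M.+1 -> J2, (exists x, F2 x /\ forall k, O2 (s k) x) ->
  a (p2 \o s) = cobound b2 s.

Definition ecoch (s : 'I_M -> J1 * J2) : G :=
  b1 (fun k => (s k).1) - b2 (fun k => (s k).2) + prism i0 (fun j => p1 j.1) (fun j => p2 j.2) a s.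

Variables (Jv : Type) (V : Jv -> set X) (q : Jv -> J1 * J2).
Hypothesis Vcov : is_cover (F1 `&` F2) V.
Hypothesis Vref : forall j, V j `&` (F1 `&` F2) `<=` O1 (q j).1 `&` O2 (q j).2.
Hypothesis Vcob : @is_coboundary X Jv G (F1 `&` F2) V M (fun s => ecoch (q \o s)).

Lemma glue_full : zeroC U a A.
Proof.
have [[d1 _]|nJ1] := pselect (exists j : J1, True); last first.
  apply: (zero_side O2o F2cov O2ref b2P) => x; rewrite AF => -[] // /F1cov [j _ _].
  by exfalso; apply: nJ1; exists j.
have [[d2 _]|nJ2] := pselect (exists j : J2, True); last first.
  apply: (zero_side O1o F1cov O1ref b1P) => x; rewrite AF => -[] // /F2cov [j _ _].
  by exfalso; apply: nJ2; exists j.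
have [Cv [CvP Cvc Cv0]] := cob_uniform Vcob.
have Vref' : forall j x, V j x -> F1 x -> F2 x -> O1 (q j).1 x /\ O2 (q j).2 x.
  by move=> j x Vx F1x F2x; case: (Vref (conj Vx (conj F1x F2x))).
have [[x0 [F1x0 F2x0]]|nP] := pselect (exists x, F1 x /\ F2 x); last first.
  pose Z3 := fun _ : False => @set0 X.
  pose j1 := fun l : False => match l with end : J1.
  pose j2 := fun l : False => match l with end : J2.
  apply: (@glue_main X G I U Uo M a i0 acoc A F1 F2 AF J1 J2 O1 O2 p1 p2 O1o O2o F1c F2c
    F1cov F2cov O1ref O2ref b1 b2 b1P b2P False Z3 j1 j2 _ _ _ _ (fun _ => 0) _ _ d1 d2).
  - by move=> l; exact: open0.
  - by move=> [].
  - by move=> x F1x F2x; exfalso; apply: nP; exists x.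
  - by move=> tau; case: (tau ord0).
  - by move=> S; rewrite cobound0.
  - move=> tau _.
    have [[k _]|nk] := pselect (exists k : 'I_M, True); first by case: (tau k).
    have M0 : M = 0%N.
      case E: M => [//|m]; exfalso; apply: nk.
      have h : (0 < M)%N by rewrite E.
      by exists (Ordinal h).
    have s0 : 'I_M -> Jv by move=> k; exfalso; apply: nk; exists k.
    have := CvP s0; rewrite Cv0 // => /(_ (or_introl M0)).
    rewrite /ecoch => E; rewrite -[LHS]E.
    congr (b1 _ - b2 _ + _).
    + by apply: funext => k; exfalso; apply: nk; exists k.
    + by apply: funext => k; exfalso; apply: nk; exists k.
    + by apply: prism_congr2 => k; exfalso; apply: nk; exists k.
have Pc : compact (F1 `&` F2).
  by apply: (subclosed_compact (closedI F1c F2c) cX).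
have [D [eps [vmap [dl [dl0 [HD Dcov]]]]]] :=
  taut Pc Vcov (ex_intro _ x0 (conj F1x0 F2x0)).
pose Nd := \bigcup_(z in F1 `&` F2) (ball z dl)°.
pose j1 x := (q (vmap x)).1.
pose j2 x := (q (vmap x)).2.
pose Z3 x := if x \in D then (ball x (eps x / 2))° `&` Nd `&` O1 (j1 x) `&` O2 (j2 x)
   `&` U (p1 (j1 x)) `&` U (p2 (j2 x)) else set0.
have half : forall e : R, 0 < e -> e / 2 <= e by move=> e e0; lra.
have nearP : forall k (tau : 'I_k -> X) y, (forall i, Z3 (tau i) y) -> (exists i : 'I_k, True) ->
    exists z, (F1 z /\ F2 z) /\ forall i, V (vmap (tau i)) z.
  move=> k tau y Hy [i _].
  have : Z3 (tau i) y := Hy i.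
  rewrite /Z3; case: ifP => // tiD [[[[[_ [z Pz bz]] _] _] _] _].
  exists z; split => // i'.
  move: (Hy i'); rewrite /Z3; case: ifP => // tD [[[[[bt _] _] _] _] _].
  have [PtD e2 e0 Hb] := HD _ tD.
  apply: Hb; split => //.
  apply: (le_ball (e1 := eps (tau i') / 2 + dl)); first by lra.
  apply: (ball_triangle (y := y)); first exact: interior_subset.
  by apply: ball_sym; exact: interior_subset.
pose psi (k : kz J1 J2 X) : X := match k with K3 x => x | _ => x0 end.
apply: (@glue_main X G I U Uo M a i0 acoc A F1 F2 AF J1 J2 O1 O2 p1 p2 O1o O2o F1c F2c
    F1cov F2cov O1ref O2ref b1 b2 b1P b2P X Z3 j1 j2 _ _ _ _
    (fun t => Cv (fun i => vmap (psi (t i)))) _ _ d1 d2).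
- move=> x; rewrite /Z3; case: ifP => _; last exact: open0.
  repeat apply: openI => //; try exact: open_interior.
  by apply: bigcup_open => z _; exact: open_interior.
- by move=> x y; rewrite /Z3; case: ifP => // _ [[[[[_ _] h1] h2] h3] h4].
- move=> x F1x F2x; have [y yD bxy] := Dcov x (conj F1x F2x).
  have yD' : y \in D by [].
  have [Py e2 e0 Hb] := HD _ yD'.
  have Vx : V (vmap y) x.
    apply: Hb; split => //; apply: (le_ball (half _ e0)); exact: interior_subset.
  have [o1 o2] := Vref' _ _ Vx F1x F2x.
  exists y; rewrite /Z3 yD'; split => //; last exact: O2ref.
  split; last exact: O1ref.
  split => //; split => //; split => //.
  exists x; first by split.
  by rewrite /interior; apply: nbhsx_ballx.
- move=> tau [y [_ Hy]]; have [z [[F1z F2z] Hz]] := nearP _ tau y Hy (ex_intro (fun _ => True) ord0 Logic.I).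
  exists z; split => // i; by case: (Vref' _ _ (Hz i) F1z F2z).
- by move=> S; exact: (Cvc (fun i => vmap (psi (S i)))).
- move=> tau [y [_ Hy]].
  have -> : Cv (fun i => vmap (psi (K3 J1 J2 (tau i)))) = ecoch (q \o (fun i => vmap (tau i))).
    rewrite CvP //.
    have [hk|nk] := pselect (exists k : 'I_M, True).
      have [z [Pz Hz]] := nearP _ tau y Hy hk.
      by right; exists z; split.
    left; case E: M => [//|m]; exfalso; apply: nk.
    have h : (0 < M)%N by rewrite E.
    by exists (Ordinal h).
  rewrite /ecoch; congr (_ + _).
Qed.
End GlueFull.


Lemma cob_zero (T J : Type) (G : zmodType) (B : set T) (W : J -> set T) m
  (c : ('I_m -> J) -> G) : (forall s, c s = 0) -> @is_coboundary T J G B W m c.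
Proof.
case: m c => [|m] c /= H; first by move=> s _; exact: H.
by exists (fun _ => 0) => s _; rewrite H cobound0.
Qed.

Lemma rel_data (X : topologicalType) (J : Type) (F : set X) (W : J -> set X) :
  (forall j, rel_open F (W j)) ->
  exists O : J -> set X, (forall j, open (O j)) /\ (forall j x, F x -> (W j x <-> O j x)).
Proof.
move=> Wro.
have : forall j, exists O : set X, open O /\ W j `&` F = O `&` F by move=> j; exact: Wro.
move=> /choice [O HO]; exists O; split => [j|j x Fx]; first by case: (HO j).
case: (HO j) => _ E; split => h.
  by have : (W j `&` F) x by []; rewrite E => -[].
by have : (O j `&` F) x by []; rewrite -E => -[].
Qed.

Lemma szS (n : int) : (0 <= n)%R -> sz n = (sz (n - 1)).+1.
Proof.
case: n => // k _; rewrite /sz subrK.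
have -> : (Posz k + 1)%R = Posz k.+1 by rewrite -addn1.
by [].
Qed.

Lemma core (G : zmodType) (n : int) (R : realType) (X : pseudoMetricType R)
  (cX : compact [set: X]) (I : Type) (U : I -> set X) (N : nat)
  (EN : N = (sz (n - 1)).+1) (a : ('I_N -> I) -> G) (hn : (0 <= n)%R)
  (hcov : is_cover [set: X] U) (hcoc : is_cocycle [set: X] U a)
  (A : set X) (Acl : closed A) (A0 : A !=set0)
  (nzA : ~ exists (J : Type) (W : J -> set X) (p : J -> I),
     is_cover A W /\ refinement A U W p /\ @is_coboundary X J G A W N (fun s => a (p \o s)))
  (minA : forall B, closed B -> B `<=` A -> B <> A ->
     exists (J : Type) (W : J -> set X) (p : J -> I),
     is_cover B W /\ refinement B U W p /\ @is_coboundary X J G B W N (fun s => a (p \o s))) :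
  strong_V G n A.
Proof.
subst N.
have Uo : forall i, open (U i).
  by move=> i; have [O [Oo EO]] := hcov.1 i; move: EO; rewrite !setIT => ->.
have acoc : forall s : 'I_(sz (n - 1)).+2 -> I, (exists x, forall k, U (s k) x) -> cobound a s = 0.
  by move=> s [x Hx]; apply: hcoc; right; exists x.
have [x0 Ax0] := A0.
have [i0 _ _] := hcov.2 x0 Logic.I.
move=> U1 U2 [U1A [Q1 [Q1o EU1]]] [U2A [Q2 [Q2o EU2]]] [u1 U1u1] [u2 U2u2] U12.
pose F1 := A `\` U1; pose F2 := A `\` U2.
have Fc : forall (Q V : set X), open Q -> V = Q `&` A -> closed (A `\` V).
  move=> Q V Qo ->; have -> : A `\` (Q `&` A) = A `&` ~` Q.
    apply/seteqP; split => x [Ax h]; split => //.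
      by move=> Qx; apply: h; split.
    by move=> [Qx _]; apply: h.
  by apply: closedI => //; exact: open_closedC.
have F1c : closed F1 by exact: Fc Q1o EU1.
have F2c : closed F2 by exact: Fc Q2o EU2.
have F1neq : F1 <> A.
  move=> E; have : F1 u1 by rewrite E; exact: U1A.
  by case => _; apply.
have F2neq : F2 <> A.
  move=> E; have : F2 u2 by rewrite E; exact: U2A.
  by case => _; apply.
have [J1 [W1 [q1 [[W1ro W1cov] [W1ref W1cob]]]]] := minA F1 F1c (fun x h => h.1) F1neq.
have [J2 [W2 [q2 [[W2ro W2cov] [W2ref W2cob]]]]] := minA F2 F2c (fun x h => h.1) F2neq.
have [b1 b1P] := W1cob.
have [b2 b2P] := W2cob.
have [O1 [O1o O1E]] := rel_data W1ro.
have [O2 [O2o O2E]] := rel_data W2ro.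
pose K0 := A `\` (U1 `|` U2).
have K0F : forall x, K0 x -> F1 x /\ F2 x.
  by move=> x [Ax h]; split; split => // Ux; apply: h; [left|right].
pose W := fun j : J1 * J2 => W1 j.1 `&` W2 j.2.
pose ec := ecoch a i0 q1 q2 b1 b2.
have ec_coc : forall s : 'I_(sz (n - 1)).+1 -> J1 * J2,
    (exists x, K0 x /\ forall k, W (s k) x) -> cobound ec s = 0.
  move=> s [x [K0x Hx]]; have [F1x F2x] := K0F x K0x.
  rewrite /ec /ecoch cobound_lin.
  have -> : cobound (fun t => b1 (fun k => (t k).1)) s = a (fun k => q1 (s k).1).
    rewrite -[RHS]/(a (q1 \o (fun k => (s k).1))) b1P //.
    by right; exists x; split => // k; case: (Hx k).
  have -> : cobound (fun t => b2 (fun k => (t k).2)) s = a (fun k => q2 (s k).2).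
    rewrite -[RHS]/(a (q2 \o (fun k => (s k).2))) b2P //.
    by right; exists x; split => // k; case: (Hx k).
  rewrite prism_cob; first by rewrite addrA subrK subrr.
  move=> i hi; apply: acoc; exists x => k.
  have [j [->|->]] := Rsimp_val i0 (fun j => q1 j.1) (fun j => q2 j.2) s k hi.
    by apply: W1ref; split => //; case: (Hx j).
  by apply: W2ref; split => //; case: (Hx j).
have WK0 : is_cover K0 W.
  split.
    move=> j; exists (O1 j.1 `&` O2 j.2); split; first exact: openI.
    apply/seteqP; split => x [[h1 h2] K0x]; have [F1x F2x] := K0F x K0x; split => //; split.
    - by apply/(O1E _ _ F1x).
    - by apply/(O2E _ _ F2x).
    - by apply/(O1E _ _ F1x).
    - by apply/(O2E _ _ F2x).
  move=> x K0x; have [F1x F2x] := K0F x K0x.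
  have [j1 _ h1] := W1cov x F1x; have [j2 _ h2] := W2cov x F2x.
  by exists (j1, j2).
exists (J1 * J2)%type, W, (@CechRep X G (n - 1) (J1 * J2) W ec).
split => //; split.
  move=> _; split => // s [e|hs]; first by [].
  exact: ec_coc.
move=> P [F1' [F2' [[F1'A [C1 [C1c EC1]]] [[F2'A [C2 [C2c EC2]]] [AE [PE [F1U F2U]]]]]]].
move=> Y g [gcont [gsurj [Jo [Vo [Voo [Vcov Vref]]]]]].
have F1'c : closed F1' by rewrite EC1; exact: closedI.
have F2'c : closed F2' by rewrite EC2; exact: closedI.
have F1'F1 : forall x, F1' x -> F1 x.
  move=> x h; split; first exact: F1'A.
  by move=> Ux; have : (F1' `&` U1) x by []; rewrite F1U.
have F2'F2 : forall x, F2' x -> F2 x.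
  move=> x h; split; first exact: F2'A.
  by move=> Ux; have : (F2' `&` U2) x by []; rewrite F2U.
have PK0 : forall x, P x -> K0 x.
  move=> x; rewrite -PE => -[h1 h2]; split; first exact: F1'A.
  case => Ux.
  - by have : (F1' `&` U1) x by []; rewrite F1U.
  - by have : (F2' `&` U2) x by []; rewrite F2U.
have nlt : ~ (n - 1 < -1)%R by move=> h; move: hn h; lia.
split.
  case => [//|[Jv [V [q [Vcov' [Vref' Vcob']]]]]].
  apply: nzA.
  apply: (@glue_full R X G I U Uo _ a i0 acoc A F1' F2' AE J1 J2 O1 O2 q1 q2 O1o O2o
    F1'c F2'c cX _ _ _ _ b1 b2 _ _ Jv V q).
  - move=> x /F1'F1 F1x; have [j _ h] := W1cov x F1x; exists j => //.
    by apply/(O1E _ _ F1x).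
  - move=> x /F2'F2 F2x; have [j _ h] := W2cov x F2x; exists j => //.
    by apply/(O2E _ _ F2x).
  - move=> j x [Ox /F1'F1 F1x]; apply: W1ref; split => //; exact/(O1E _ _ F1x).
  - move=> j x [Ox /F2'F2 F2x]; apply: W2ref; split => //; exact/(O2E _ _ F2x).
  - move=> s [x [/F1'F1 F1x Hx]]; apply: b1P; right; exists x; split => // k.
    exact/(O1E _ _ F1x).
  - move=> s [x [/F2'F2 F2x Hx]]; apply: b2P; right; exists x; split => // k.
    exact/(O2E _ _ F2x).
  - by rewrite PE.
  - move=> j x [Vx Px].
    have [F1x F2x] : F1 x /\ F2 x by case: Px => /F1'F1 ? /F2'F2 ?.
    have [h1 h2] : W (q j) x by apply: Vref'; split => //; rewrite -PE.
    by split; [apply/(O1E _ _ F1x)|apply/(O2E _ _ F2x)].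
  - by rewrite PE.
have /choice [f Hf] := Vref.
have gopen : forall j, exists O : set X, open O /\ (g @^-1` Vo j) `&` P = O `&` P.
  move=> j; have := (continuousP _).1 gcont (Vo j) (Voo j).
  by move=> /open_subspaceP [O Oo EO]; exists O; split => //; rewrite EO.
exists (@CechRep Y G (n - 1) Jo Vo (fun s => ec (f \o s))); split.
  move=> _; split.
    split; last by move=> y _; exact: Vcov.
    by move=> j; exists (Vo j); split.
  move=> s [//|[y [_ Hy]]].
  have : [set: Y] y by [].
  rewrite -gsurj => -[x Px gx].
  apply: (ec_coc (f \o s)); exists x; split; first exact: PK0.
  move=> k; apply: (Hf (s k)); split => //=; rewrite gx; exact: Hy.
right; exists Jo, (fun j => g @^-1` Vo j), (fun j => (f j, j)); split; [|split].
- split; first by move=> j; have [O [Oo EO]] := gopen j; exists O.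
  by move=> x Px; have [j _ h] := Vcov (g x) Logic.I; exists j.
- move=> j x [h Px]; split => //; exact: (Hf j).
- apply: cob_zero => t /=; exact: subrr.
Qed.


Lemma neg1 (X : topologicalType) (G : zmodType) (I : Type) (U : I -> set X) (N : nat)
  (EN : N = 0%N) (a : ('I_N -> I) -> G) (A : set X) :
  is_cover [set: X] U -> is_cocycle [set: X] U a -> A !=set0 ->
  exists (J : Type) (W : J -> set X) (p : J -> I),
   is_cover A W /\ refinement A U W p /\ @is_coboundary X J G A W N (fun s => a (p \o s)).
Proof.
subst N => -[Uro Ucov] coc [y Ay].
exists I, U, id; split; [|split].
- split; last by move=> x _; exact: Ucov.
  move=> i; have [O [Oo EO]] := Uro i; exists O; split => //.
  have E : U i = O by move: EO; rewrite !setIT.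
  by rewrite E.
- by move=> i x [].
- move=> s _ /=.
  have [i _ Ui] := Ucov y Logic.I.
  have := coc (fun _ => i); rewrite cobound_alt big_ord1 /alt /= => <-.
    by congr a; apply: funext => -[].
  by right; exists y.
Qed.

Theorem proposition2p5 (G : zmodType) (n : int) (R : realType)
  (X : pseudoMetricType R) :
  hausdorff_space X -> compact [set: X] ->
  forall alpha : cech_rep X G n,
    cech_valid [set: X] alpha -> ~ cech_zero [set: X] alpha ->
  forall A : set X, carrier alpha A -> strong_V G n A.
Proof.
move=> hX cX [I U a] valid nz A [Acl [A0 [nzA minA]]].
have hn1 : (-1 <= n)%R.
  by rewrite leNgt; apply/negP => h; apply: nz; left.
have [hc hcoc] := valid hn1.
have hn : (0 <= n)%R.
  have [E|ne] := eqVneq n (-1).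
    exfalso; apply: nzA; right.
    by apply: (@neg1 X G I U (sz n) _ a A hc hcoc A0); rewrite E /sz addNr.
  by move: hn1 ne; lia.
apply: (@core G n R X cX I U (sz n) (szS hn) a hn hc hcoc A Acl A0).
- by move=> h; apply: nzA; right.
- move=> B Bc BA BnA; case: (minA B Bc BA BnA) => // h; exfalso; move: h hn; lia.
Qed.
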